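(* (i) If $d$ is large enough, then for every $i\in\{1,\dots,k+1\}$ and every $y\in C_{i-1}$, $D_i(y)\subset B(y,r_i)\cap C_i$. (ii) For $d$ large enough: let $x_0\in D_0$; if there exist $X_1,\dots,X_k\in\chi_1$ and $X_{k+1}\in\chi_\rho$ such that $X_1\in D_1(x_0)$ and $X_i\in D_i(X_{i-1})$ for $2\le i\le k+1$, then the event $\mathcal G^+(x_0)$ occurs.
   Context: Fix $\rho>1$, an integer $k\ge1$, $\kappa\in(\kappa^c_\rho(k),1)$, and $(a_i)_{2\le i\le k+1}\in(0,1)^k$ satisfying $1<\kappa^{k+1}\frac{(1+\rho)^2}{4\rho}\sqrt{\prod_{2\le j\le k+1}(1-a_j^2)}<\kappa\frac{d_{k+1}}{2\rho}$, where $r_1=r_{k+1}=1+\rho$, $r_i=2$ for $2\le i\le k$, $d_1=1+\rho$, $d_i^2=d_{i-1}^2+2r_ia_id_{i-1}+r_i^2$ ($d_i>0$), and $\kappa^c_\rho(k)=\inf_{0\le a_i<1}\max\big((4\rho/((1+\rho)^2\sqrt{\prod_{2\le i\le k+1}(1-a_i^2)}))^{1/(k+1)},\,2\rho/d_{k+1}\big)$. For $d\ge3$ let $v_d$ be the volume of the unit ball of $\mathbb{R}^d$, $B(y,r)$ the open ball in $\mathbb{R}^d$, $B''(c,r)$ the open ball in $\mathbb{R}^{d-2}$, and write $x=(x',x'')\in\mathbb{R}^2\times\mathbb{R}^{d-2}$. Let $\chi_1,\chi_\rho$ be independent homogeneous Poisson point processes on $\mathbb{R}^d$ with intensities $\kappa^d/(v_d2^d)$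 and $\kappa^d/(v_d2^d\rho^d)$. Sets: $D'_0=(-d^{-1/2},d^{-1/2})\times(-d^{-1/2},0)$, $D'_i=(0,d^{-1/2})^2$ for $1\le i\le k+1$; $C''_0=\{0\}$, $C''_i=B''(0,d_i-2d^{-1})\setminus B''(0,d_i-3d^{-1})$ for $1\le i\le k+1$; $C_i=D'_i\times C''_i$. For $2\le i\le k+1$ and $d$ large, $\theta_i\in(0,\pi/2)$ is defined by $\cos\theta_i=\frac{d_{i-1}+a_ir_i}{d_i}+d^{-1/2}$. For $y\in C_{i-1}$: $D''_i(y'')=\{z''\in C''_i:\langle z'',y''\rangle\ge\|y''\|\|z''\|\cos\theta_i\}$ for $2\le i\le k+1$, $D''_1(y'')=C''_1$, and $D_i(y)=D'_i\times D''_i(y'')$; $D_0=D'_0\times C''_0$. Event: with $W^+=d^{-1/2}((0,1)\times(0,1)\times\mathbb{R}^{d-2})$, for $x_0\in D_0$, $\mathcal G^+(x_0)$ is the event that there exist distinct $x_1,\dots,x_k\in\chi_1\cap W^+$ and $x_{k+1}\in\chi_\rho\cap W^+$ with $\|x_1-x_0\|<1+\rho$, $\|x_{i+1}-x_i\|<2$ for $1\le i\le k-1$, and $\|x_{k+1}-x_k\|<1+\rho$. *)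

(* Defs.v *)
From HB Require Import structures.
From mathcomp Require Import all_boot all_order all_algebra.
From mathcomp Require Import all_classical all_reals all_analysis.
Set Implicit Arguments. Unset Strict Implicit. Unset Printing Implicit Defensive.
Import Order.TTheory GRing.Theory Num.Theory.
Local Open Scope ring_scope.

Definition enorm (R : realType) (d : nat) (x : 'I_d -> R) : R :=
  Num.sqrt (\sum_(i < d) x i ^+ 2).
Definition edist (R : realType) (d : nat) (x y : 'I_d -> R) : R :=
  enorm (fun i => x i - y i).

(* x = (x', x'') in R^2 x R^{d-2}: x' = coordinates 0,1 ; x'' = coordinates 2..d-1 *)
Definition tnorm (R : realType) (d : nat) (x : 'I_d -> R) : R :=
  Num.sqrt (\sum_(i < d | (2 <= i)%N) x i ^+ 2).
Definition tdot (R : realType) (d : nat) (x y : 'I_d -> R) : R :=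
  \sum_(i < d | (2 <= i)%N) x i * y i.

Definition isq (R : realType) (d : nat) : R := (Num.sqrt (d%:R))^-1.

Definition rr (R : realType) (rho : R) (k i : nat) : R :=
  if (i == 1)%N || (i == k.+1)%N then 1 + rho else 2.

(* d_1 = 1 + rho, d_i = sqrt(d_{i-1}^2 + 2 r_i a_i d_{i-1} + r_i^2) for i >= 2;
   d_0 is never used (set to 0). a is indexed by 2..k+1. *)
Fixpoint dd (R : realType) (rho : R) (k : nat) (a : nat -> R) (n : nat) : R :=
  match n with
  | 0 => 0
  | S m =>
    match m with
    | 0 => 1 + rho
    | S _ => let p := dd rho k a m in
             Num.sqrt (p ^+ 2 + 2 * rr rho k n * a n * p + rr rho k n ^+ 2)
    end
  end.

Definition kappac (R : realType) (rho : R) (k : nat) : R :=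
  inf [set m : R | exists a : nat -> R,
         (forall i : nat, (2 <= i <= k.+1)%N -> 0 <= a i < 1) /\
         m = Num.max
               ((4 * rho / ((1 + rho) ^+ 2 *
                   Num.sqrt (\prod_(2 <= j < k.+2) (1 - a j ^+ 2)))) `^ ((k.+1)%:R^-1))
               (2 * rho / dd rho k a k.+1)].

Definition Dp0 (R : realType) (d : nat) (x : 'I_d -> R) : Prop :=
  forall i : 'I_d,
    ((val i = 0)%N -> - @isq R d < x i < @isq R d) /\
    ((val i = 1)%N -> - @isq R d < x i < 0).

Definition Dpos (R : realType) (d : nat) (x : 'I_d -> R) : Prop :=
  forall i : 'I_d, (val i = 0 \/ val i = 1)%N -> 0 < x i < @isq R d.

Definition Wplus (R : realType) (d : nat) (x : 'I_d -> R) : Prop :=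
  forall i : 'I_d, (val i = 0 \/ val i = 1)%N -> 0 < (@isq R d)^-1 * x i < 1.

Definition Csec0 (R : realType) (d : nat) (x : 'I_d -> R) : Prop :=
  forall i : 'I_d, (2 <= i)%N -> x i = 0.

Definition Csec (R : realType) (rho : R) (k : nat) (a : nat -> R) (d : nat)
    (i : nat) (x : 'I_d -> R) : Prop :=
  tnorm x < dd rho k a i - 2 / d%:R /\ ~ (tnorm x < dd rho k a i - 3 / d%:R).

Definition Cset (R : realType) (rho : R) (k : nat) (a : nat -> R) (d : nat)
    (i : nat) (x : 'I_d -> R) : Prop :=
  if i == 0%N then Dp0 x /\ Csec0 x else Dpos x /\ Csec rho k a i x.

Definition costheta (R : realType) (rho : R) (k : nat) (a : nat -> R) (d i : nat) : R :=
  (dd rho k a i.-1 + a i * rr rho k i) / dd rho k a i + @isq R d.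

Definition Dsec (R : realType) (rho : R) (k : nat) (a : nat -> R) (d : nat)
    (i : nat) (y z : 'I_d -> R) : Prop :=
  if i == 1%N then Csec rho k a 1 z
  else Csec rho k a i z /\ tnorm y * tnorm z * costheta rho k a d i <= tdot z y.

Definition Dset (R : realType) (rho : R) (k : nat) (a : nat -> R) (d : nat)
    (i : nat) (y z : 'I_d -> R) : Prop :=
  Dpos z /\ Dsec rho k a i y z.

Definition D0 (R : realType) (d : nat) (x : 'I_d -> R) : Prop := Dp0 x /\ Csec0 x.

Definition ball_d (R : realType) (d : nat) (y : 'I_d -> R) (r : R) (z : 'I_d -> R) : Prop :=
  edist z y < r.

(* the event G^+(x0), for a realization chi1, chirho of the two point processes *)
Definition Gplus (R : realType) (rho : R) (k d : nat)
    (chi1 chirho : set ('I_d -> R)) (x0 : 'I_d -> R) : Prop :=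
  exists x : nat -> 'I_d -> R,
    (forall i, (1 <= i <= k)%N -> chi1 (x i) /\ Wplus (x i)) /\
    (forall i j, (1 <= i <= k)%N -> (1 <= j <= k)%N -> i <> j -> x i <> x j) /\
    chirho (x k.+1) /\ Wplus (x k.+1) /\
    edist (x 1%N) x0 < 1 + rho /\
    (forall i, (1 <= i <= k.-1)%N -> edist (x i.+1) (x i) < 2) /\
    edist (x k.+1) (x k) < 1 + rho.

(* Main.v *)
Require Import Defs.
From HB Require Import structures.
From mathcomp Require Import all_boot all_order all_algebra.
From mathcomp Require Import all_classical all_reals all_analysis.
From mathcomp Require Import ring lra zify.
Set Implicit Arguments. Unset Strict Implicit.
Import Order.TTheory GRing.Theory Num.Theory.
Local Open Scope ring_scope.

Lemma key2 (R : realType) (p q r a s w Y Z D : R) :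
  0 < p -> 0 < q -> 0 < r -> 0 <= a <= 1 ->
  q ^+ 2 = p ^+ 2 + 2 * r * a * p + r ^+ 2 ->
  0 < s <= 1 -> w = s * s ->
  6 * s <= p -> 6 * s <= q -> 4 * (3 * (p + q) + 4) * s <= p * q ->
  p - 3 * w <= Y -> Y < p - 2 * w -> q - 3 * w <= Z -> Z < q - 2 * w ->
  Y * Z * ((p + a * r) / q + s) <= D ->
  Z ^+ 2 + Y ^+ 2 - 2 * D <= r ^+ 2 - 8 * w.
Proof.
move=> p0 q0 r0 /andP[a0 a1] hq /andP[s0 s1] hw h6p h6q hK hY1 hY2 hZ1 hZ2 hD.
set cq := p + a * r.
have cq0 : 0 <= cq by rewrite /cq; nra.
have cqq : cq <= q.
  have aa : a * a <= 1 by nra.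
  have : cq ^+ 2 <= q ^+ 2.
    rewrite hq /cq; have : 0 <= r * r * (1 - a * a) by apply: mulr_ge0; nra.
    nra.
  by rewrite -[cq ^+ 2]mulr1 -[q ^+ 2]mulr1 => h; nra.
set c := cq / q.
have cqe : c * q = cq by rewrite /c divfK // gt_eqF.
have c0 : 0 <= c by rewrite /c divr_ge0 // ltW.
have c1 : c <= 1 by rewrite /c ler_pdivrMr // mul1r.
have ws : w <= s by rewrite hw; nra.
have Yp : Y < p by nra.
have Zq : Z < q by nra.
have Y2 : p <= 2 * Y by nra.
have Z2 : q <= 2 * Z by nra.
have Y0 : 0 <= Y by nra.
have Z0 : 0 <= Z by nra.
have hr : r ^+ 2 = q ^+ 2 + p ^+ 2 - 2 * p * q * c.
  rewrite hq; have -> : 2 * p * q * c = 2 * p * cq by rewrite -cqe; ring.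
  rewrite /cq; ring.
have dif : p * q - Y * Z <= 3 * (p + q) * w by nra.
have dif0 : 0 <= p * q - Y * Z by nra.
have YZ : p * q <= 4 * (Y * Z) by nra.
have YZs : (3 * (p + q) + 4) * w <= Y * Z * s.
  have h1 : 4 * (3 * (p + q) + 4) * s * s <= p * q * s by nra.
  have h2 : p * q * s <= 4 * (Y * Z) * s by nra.
  rewrite hw; nra.
have e1 : Z ^+ 2 <= q ^+ 2 by nra.
have e2 : Y ^+ 2 <= p ^+ 2 by nra.
have e3 : c * (p * q - Y * Z) <= p * q - Y * Z by nra.
have hD' : Y * Z * c + Y * Z * s <= D by rewrite -mulrDr.
nra.
Qed.

Lemma key1 (R : realType) (rho Z s w : R) :
  1 < rho -> 0 < s -> w = s * s -> s <= rho - 1 -> s <= 1 ->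
  0 <= Z -> Z < 1 + rho - 2 * w -> Z ^+ 2 <= (1 + rho) ^+ 2 - 8 * w.
Proof.
move=> hr s0 hw hs s1 Z0 hZ.
have ws : w <= s by rewrite hw; nra.
have w0 : 0 <= w by rewrite hw; nra.
have : Z ^+ 2 <= (1 + rho - 2 * w) ^+ 2 by nra.
nra.
Qed.
Lemma split_sum (R : realType) (d : nat) (F : 'I_d -> R) : (2 <= d)%N ->
  exists i0 i1 : 'I_d, val i0 = 0%N /\ val i1 = 1%N /\
    \sum_(i < d) F i = F i0 + F i1 + \sum_(i < d | (2 <= i)%N) F i.
Proof.
case: d F => [|[|d]] F // _.
exists ord0, (lift ord0 ord0); split; first by []; split; first by [].
rewrite (bigD1 ord0) //= (bigD1 (lift ord0 ord0)) //= addrA; congr (_ + _).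
apply: eq_bigl => -[[|[|m]] Hm] //.
Qed.

Lemma dist_sq (R : realType) (d : nat) (z y : 'I_d -> R) : (2 <= d)%N ->
  exists i0 i1 : 'I_d, val i0 = 0%N /\ val i1 = 1%N /\
    Defs.edist z y ^+ 2 = (z i0 - y i0) ^+ 2 + (z i1 - y i1) ^+ 2 +
       (tnorm z ^+ 2 + tnorm y ^+ 2 - 2 * tdot z y).
Proof.
move=> hd; have [i0 [i1 [h0 [h1 hs]]]] := @split_sum R d (fun i => (z i - y i) ^+ 2) hd.
exists i0, i1; split=> //; split=> //.
rewrite /Defs.edist /enorm sqr_sqrtr; last by apply: sumr_ge0 => i _; exact: sqr_ge0.
rewrite hs; congr (_ + _).
rewrite /tnorm !sqr_sqrtr; try by apply: sumr_ge0 => i _; exact: sqr_ge0.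
rewrite /tdot mulr_sumr.
rewrite -big_split -sumrB /=; apply: eq_bigr => i _; ring.
Qed.
Lemma rr_pos (R : realType) (rho : R) k i : 1 < rho -> 0 < rr rho k i.
Proof. by move=> h; rewrite /rr; case: ifP => _; lra. Qed.

Lemma dd_S (R : realType) (rho : R) k a m :
  dd rho k a m.+2 = Num.sqrt (dd rho k a m.+1 ^+ 2
     + 2 * rr rho k m.+2 * a m.+2 * dd rho k a m.+1 + rr rho k m.+2 ^+ 2).
Proof. by []. Qed.

Lemma dd_facts (R : realType) (rho : R) k a : 1 < rho ->
  (forall i : nat, (2 <= i <= k.+1)%N -> 0 < a i < 1) ->
  forall m, (m.+2 <= k.+1)%N ->
   0 < dd rho k a m.+1 /\ dd rho k a m.+1 < dd rho k a m.+2 /\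
   dd rho k a m.+2 ^+ 2 = dd rho k a m.+1 ^+ 2
     + 2 * rr rho k m.+2 * a m.+2 * dd rho k a m.+1 + rr rho k m.+2 ^+ 2.
Proof.
move=> hr ha; elim=> [|m IH] hm.
- have p0 : 0 < dd rho k a 1 by rewrite /=; lra.
  have := ha 2%N; rewrite hm => /(_ isT) /andP[a0 a1].
  have r0 := rr_pos k 2 hr.
  have pos : 0 <= dd rho k a 1 ^+ 2 + 2 * rr rho k 2 * a 2%N * dd rho k a 1 + rr rho k 2 ^+ 2.
    by apply: addr_ge0; [apply: addr_ge0; [exact: sqr_ge0|]|exact: sqr_ge0];
       rewrite mulr_ge0 // ?mulr_ge0 // ltW.
  split=> //; split; last by rewrite dd_S sqr_sqrtr.
  have : 0 < 2 * rr rho k 2 * a 2%N * dd rho k a 1 by rewrite !mulr_gt0.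
  have : 0 < rr rho k 2 ^+ 2 by rewrite exprn_gt0.
  have : 0 < dd rho k a 1 ^+ 2 by rewrite exprn_gt0.
  move=> h1 h2 h3.
  rewrite dd_S -[X in X < _]ger0_norm ?ltW // -sqrtr_sqr ltr_sqrt; lra.
- have [p0 [lt _]] := IH (ltnW hm).
  have q0 : 0 < dd rho k a m.+2 by lra.
  have := ha m.+3; rewrite hm andbT => /(_ isT) /andP[a0 a1].
  have r0 := rr_pos k m.+3 hr.
  set p := dd rho k a m.+2.
  have pos : 0 <= p ^+ 2 + 2 * rr rho k m.+3 * a m.+3 * p + rr rho k m.+3 ^+ 2.
    by apply: addr_ge0; [apply: addr_ge0; [exact: sqr_ge0|]|exact: sqr_ge0];
       rewrite mulr_ge0 // ?mulr_ge0 // ltW.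
  split=> //; split; last by rewrite dd_S sqr_sqrtr.
  have : 0 < 2 * rr rho k m.+3 * a m.+3 * p by rewrite !mulr_gt0.
  have : 0 < rr rho k m.+3 ^+ 2 by rewrite exprn_gt0.
  have : 0 < p ^+ 2 by rewrite exprn_gt0.
  move=> h1 h2 h3.
  rewrite dd_S -/p -[X in X < _]ger0_norm ?ltW // -sqrtr_sqr ltr_sqrt; lra.
Qed.
Lemma ball_lem (R : realType) (d : nat) (z y : 'I_d -> R) (s r : R) :
  (2 <= d)%N -> 0 < s -> 0 < r ->
  (forall i : 'I_d, (val i = 0 \/ val i = 1)%N -> -s < z i < s /\ -s < y i < s) ->
  tnorm z ^+ 2 + tnorm y ^+ 2 - 2 * tdot z y <= r ^+ 2 - 8 * (s * s) ->
  Defs.edist z y < r.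
Proof.
move=> hd s0 r0 hc hT.
have [i0 [i1 [h0 [h1 hE]]] ] := dist_sq z y hd.
have [/andP[a1 a2] /andP[b1 b2]] := hc i0 (or_introl h0).
have [/andP[c1 c2] /andP[e1 e2]] := hc i1 (or_intror h1).
have u0 : (z i0 - y i0) ^+ 2 < 4 * (s * s) by nra.
have u1 : (z i1 - y i1) ^+ 2 < 4 * (s * s) by nra.
have e0 : 0 <= Defs.edist z y by rewrite /Defs.edist /enorm sqrtr_ge0.
have : Defs.edist z y ^+ 2 < r ^+ 2 by rewrite hE; lra.
nra.
Qed.

Lemma dd_pos (R : realType) (rho : R) k a : 1 < rho ->
  (forall i : nat, (2 <= i <= k.+1)%N -> 0 < a i < 1) ->
  forall n, (1 <= n <= k.+1)%N -> 0 < dd rho k a n.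
Proof.
move=> hr ha [|[|m]] // hn; first by rewrite /=; lra.
by have [_ [h _]] := dd_facts hr ha hn; have [h1 _] := dd_facts hr ha hn; lra.
Qed.

Lemma dd_mono (R : realType) (rho : R) k a : 1 < rho ->
  (forall i : nat, (2 <= i <= k.+1)%N -> 0 < a i < 1) ->
  forall n m, (1 <= n)%N -> (n <= m)%N -> (m <= k.+1)%N -> dd rho k a n <= dd rho k a m.
Proof.
move=> hr ha n; elim=> [|m IH] h1 h2 h3; first by case: n h1 h2.
case: (ltngtP n m.+1) h2 => [lt|//|->] _; last by [].
have := IH h1 lt (ltnW h3).
move: lt h3; case: m {IH} => [|m] lt h3; first by case: n h1 lt.
have [_ [h _]] := dd_facts hr ha h3; lra.
Qed.

Definition gterm (R : realType) (rho : R) k a (i : nat) : R :=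
  let p := dd rho k a i.-1 in let q := dd rho k a i in
  `|6 / p| + `|6 / q| + `|4 * (3 * (p + q) + 4) / (p * q)| + `|1 / (q - p)|.

Definition Mthr (R : realType) (rho : R) k a : R :=
  1 + `|1 / (rho - 1)| + \sum_(i < k.+2) gterm rho k a i.

Lemma gterm_ge0 (R : realType) (rho : R) k a i : 0 <= gterm rho k a i.
Proof. by rewrite /gterm !addr_ge0. Qed.

Lemma g_le_M (R : realType) (rho : R) k a i : (i < k.+2)%N ->
  gterm rho k a i <= Mthr rho k a.
Proof.
move=> hi; rewrite /Mthr (bigD1 (Ordinal hi)) //=.
have : 0 <= \sum_(j < k.+2 | j != Ordinal hi) gterm rho k a j
  by apply: sumr_ge0 => j _; exact: gterm_ge0.
have : 0 <= `|1 / (rho - 1)| :> R by [].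
lra.
Qed.

Lemma M_ge (R : realType) (rho : R) k a :
  1 <= Mthr rho k a /\ 1 / (rho - 1) <= Mthr rho k a.
Proof.
rewrite /Mthr.
have : 0 <= \sum_(j < k.+2) gterm rho k a j
  by apply: sumr_ge0 => j _; exact: gterm_ge0.
have : 1 / (rho - 1) <= `|1 / (rho - 1)| by exact: ler_norm.
have : 0 <= `|1 / (rho - 1)| :> R by [].
lra.
Qed.

Lemma inv_bound (R : realType) (b c t : R) : 0 < t -> 0 < c -> b / c <= t -> b * t^-1 <= c.
Proof.
move=> t0 c0; rewrite ler_pdivrMr // => h; rewrite ler_pdivrMr //; lra.
Qed.

Lemma isq_facts (R : realType) (d : nat) : (1 <= d)%N ->
  0 < Num.sqrt (d%:R : R) /\ isq R d = (Num.sqrt (d%:R : R))^-1 /\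
  (d%:R : R)^-1 = isq R d * isq R d.
Proof.
move=> hd; have d0 : 0 < (d%:R : R) by rewrite ltr0n.
have t0 : 0 < Num.sqrt (d%:R : R) by rewrite sqrtr_gt0.
split=> //; split=> //.
by rewrite /isq -invfM -expr2 sqr_sqrtr // ltW.
Qed.

Lemma coord_pos (R : realType) d (x : 'I_d -> R) : Dpos x ->
  forall i : 'I_d, (val i = 0 \/ val i = 1)%N -> - isq R d < x i < isq R d.
Proof. move=> h i hi; have /andP[h1 h2] := h i hi; apply/andP; split=> //; lra. Qed.

Lemma coord_p0 (R : realType) d (x : 'I_d -> R) : Dp0 x ->
  forall i : 'I_d, (val i = 0 \/ val i = 1)%N -> - isq R d < x i < isq R d.
Proof.
move=> h i [hi|hi]; first by have [h1 _] := h i; exact: h1.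
have [_ /(_ hi) /andP[h1 h2]] := h i; apply/andP; split=> //.
have : 0 < isq R d.
  have := h i; move=> [_ /(_ hi) /andP[u v]]; lra.
lra.
Qed.

Lemma tnorm0 (R : realType) d (y : 'I_d -> R) : Csec0 y -> tnorm y = 0.
Proof.
move=> h; rewrite /tnorm big1 ?sqrtr0 // => i hi; by rewrite h // expr0n.
Qed.

Lemma tdot0 (R : realType) d (z y : 'I_d -> R) : Csec0 y -> tdot z y = 0.
Proof. by move=> h; rewrite /tdot big1 // => i hi; rewrite h // mulr0. Qed.

Lemma tnorm_ge0 (R : realType) d (y : 'I_d -> R) : 0 <= tnorm y.
Proof. exact: sqrtr_ge0. Qed.

Lemma partI (R : realType) (rho : R) k a : 1 < rho ->
  (forall i : nat, (2 <= i <= k.+1)%N -> 0 < a i < 1) ->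
  forall d : nat, (3 <= d)%N -> Mthr rho k a <= Num.sqrt (d%:R : R) ->
  forall i, (1 <= i <= k.+1)%N ->
  forall y z : 'I_d -> R, Cset rho k a i.-1 y -> Dset rho k a i y z ->
  Defs.edist z y < rr rho k i /\ Cset rho k a i z.
Proof.
move=> hr ha d hd hM i hi y z Hy [Dz Sz].
have d1 : (1 <= d)%N by apply: leq_trans hd.
have d2 : (2 <= d)%N by apply: leq_trans hd.
have [t0 [hs hw]] := isq_facts R d1.
set t := Num.sqrt (d%:R : R) in t0 hs hM.
set s := isq R d in hs hw Dz Sz Hy *.
have [M1 Mr] := M_ge rho k a.
have s0 : 0 < s by rewrite hs invr_gt0.
have s1 : s <= 1 by rewrite hs invf_le1 //; lra.
have srho : s <= rho - 1.
  by rewrite hs -[t^-1]mul1r; apply: inv_bound => //; lra.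
have two : forall c : R, c / d%:R = c * (s * s) by move=> c; rewrite hw.
have Csz : Csec rho k a i z by move: Sz; rewrite /Dsec; case: ifP => [/eqP -> //|_ []].
have i0 : (i == 0%N) = false by case: i hi {Csz Hy Sz}.
split; last by rewrite /Cset i0.
move: Csz => [Cz1 /negP]; rewrite -leNgt => Cz2.
rewrite !two in Cz1 Cz2.
case: i hi i0 Hy Sz Cz1 Cz2 => [//|[|m]] hi _ Hy Sz Cz1 Cz2.
-
  move: Hy; rewrite /Cset /= => -[Dy Cy].
  have rr1 : rr rho k 1 = 1 + rho by rewrite /rr.
  rewrite rr1; apply: (ball_lem d2 s0); first by lra.
    by move=> j hj; split; [apply: coord_pos|apply: coord_p0].
  rewrite (tnorm0 Cy) (tdot0 z Cy) expr0n /= mulr0 addr0 subr0.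
  apply: (key1 hr s0 erefl srho s1 (tnorm_ge0 z)).
  by move: Cz1; rewrite /=.
-
  have hm : (m.+2 <= k.+1)%N by case/andP: hi.
  have [p0 [pq hq]] := dd_facts hr ha hm.
  have := ha m.+2; rewrite hm /= => /(_ isT) /andP[a0 a1].
  move: Hy; rewrite /Cset /= => -[Dy [Cy1 /negP]]; rewrite -leNgt !two => Cy2; rewrite two in Cy1.
  move: Sz; rewrite /Dsec /= => -[_ HD].
  have r0 := rr_pos k m.+2 hr.
  have gM : gterm rho k a m.+2 <= Mthr rho k a by apply: g_le_M.
  have gM' : gterm rho k a m.+2 <= t by lra.
  move: gM'; rewrite /gterm /= => gM'.
  set p := dd rho k a m.+1 in p0 pq hq gM' Cy1 Cy2 HD.
  set q := dd rho k a m.+2 in pq hq gM' Cz1 Cz2 HD.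
  have q0 : 0 < q by lra.
  have n1 := ler_norm (6 / p); have n2 := ler_norm (6 / q).
  have n3 := ler_norm (4 * (3 * (p + q) + 4) / (p * q)); have n4 := ler_norm (1 / (q - p)).
  have n0 : forall x : R, 0 <= `|x| by [].
  have b1 : 6 * s <= p by rewrite hs; apply: inv_bound => //; have := n0 (6/q); have := n0 (4 * (3 * (p + q) + 4) / (p * q)); have := n0 (1 / (q - p)); lra.
  have b2 : 6 * s <= q by rewrite hs; apply: inv_bound => //; have := n0 (6/p); have := n0 (4 * (3 * (p + q) + 4) / (p * q)); have := n0 (1 / (q - p)); lra.
  have b3 : 4 * (3 * (p + q) + 4) * s <= p * q.
    by rewrite hs; apply: inv_bound => //; [rewrite mulr_gt0|]; have := n0 (6/p); have := n0 (6/q); have := n0 (1 / (q - p)); lra.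
  apply: (ball_lem d2 s0 r0).
    by move=> j hj; split; apply: coord_pos.

  apply: (key2 p0 q0 r0 _ hq _ erefl b1 b2 b3 Cy2 Cy1 Cz2 Cz1); first by rewrite ltW ?ltW.
    by rewrite s0 s1.
  by rewrite /costheta /= in HD.
Qed.

Lemma chainC (R : realType) (rho : R) k a : 1 < rho ->
  (forall i : nat, (2 <= i <= k.+1)%N -> 0 < a i < 1) ->
  forall d : nat, (3 <= d)%N -> Mthr rho k a <= Num.sqrt (d%:R : R) ->
  forall (x0 : 'I_d -> R) (X : nat -> 'I_d -> R), D0 x0 ->
  Dset rho k a 1 x0 (X 1%N) ->
  (forall i : nat, (2 <= i <= k.+1)%N -> Dset rho k a i (X i.-1) (X i)) ->
  forall n, (n.+1 <= k.+1)%N ->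
    Cset rho k a n.+1 (X n.+1) /\
    Defs.edist (X n.+1) (if n is 0 then x0 else X n) < rr rho k n.+1.
Proof.
move=> hr ha d hd hM x0 X Hx0 H1 HX; elim=> [|n IH] hn.
  have := @partI R rho k a hr ha d hd hM 1%N isT x0 (X 1%N).
  by move: Hx0 => [u v]; move/(_ (conj u v) H1) => [h1 h2].
have [Cn _] := IH (ltnW hn).
have hh : (1 <= n.+2 <= k.+1)%N by rewrite hn.
have := @partI R rho k a hr ha d hd hM n.+2 hh (X n.+1) (X n.+2) Cn.
move=> h; have [h1 h2] := h (HX n.+2 hh); by split.
Qed.

Lemma gap (R : realType) (rho : R) k a : 1 < rho ->
  (forall i : nat, (2 <= i <= k.+1)%N -> 0 < a i < 1) ->
  forall d : nat, (1 <= d)%N -> Mthr rho k a <= Num.sqrt (d%:R : R) ->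
  forall m, (m.+2 <= k.+1)%N -> isq R d <= dd rho k a m.+2 - dd rho k a m.+1.
Proof.
move=> hr ha d hd hM m hm.
have [t0 [hs hw]] := isq_facts R hd.
have [p0 [pq hq]] := dd_facts hr ha hm.
have gM : gterm rho k a m.+2 <= Mthr rho k a by apply: g_le_M; exact: hm.
move: gM; rewrite /gterm; cbv zeta; change (m.+2.-1) with m.+1 => gM.
rewrite hs -[_^-1]mul1r; apply: inv_bound => //; first lra.
have := ler_norm (1 / (dd rho k a m.+2 - dd rho k a m.+1)).
have n0 : forall x : R, 0 <= `|x| by [].
move: (n0 (6 / dd rho k a m.+1)) (n0 (6 / dd rho k a m.+2))
  (n0 (4 * (3 * (dd rho k a m.+1 + dd rho k a m.+2) + 4) / (dd rho k a m.+1 * dd rho k a m.+2))).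
lra.
Qed.

Lemma CsetW (R : realType) (rho : R) k a d i (x : 'I_d -> R) : (i != 0)%N ->
  Cset rho k a i x -> Wplus x /\ Dpos x.
Proof.
rewrite /Cset => /negbTE -> [Dx _]; split=> // j hj.
have /andP[h1 h2] := Dx j hj.
have s0 : 0 < isq R d by lra.
rewrite mulrC; apply/andP; split; first exact: divr_gt0.
by rewrite ltr_pdivrMr // mul1r.
Qed.

Lemma sep (R : realType) (rho : R) k a : 1 < rho ->
  (forall i : nat, (2 <= i <= k.+1)%N -> 0 < a i < 1) ->
  forall d : nat, (3 <= d)%N -> Mthr rho k a <= Num.sqrt (d%:R : R) ->
  forall i j (x y : 'I_d -> R), (1 <= i)%N -> (i < j)%N -> (j <= k.+1)%N ->
  Cset rho k a i x -> Cset rho k a j y -> tnorm x < tnorm y.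
Proof.
move=> hr ha d hd hM i j x y hi hij hj.
have d1 : (1 <= d)%N by apply: leq_trans hd.
have [t0 [hs hw]] := isq_facts R d1.
have [M1 _] := M_ge rho k a.
have s1 : isq R d <= 1 by rewrite hs invf_le1 //; lra.
have s0 : 0 < isq R d by rewrite hs invr_gt0.
have hdd : dd rho k a i + isq R d <= dd rho k a j.
  case: i hi hij => [//|i] _ hij.
  have hm : (i.+2 <= k.+1)%N by apply: leq_trans hij hj.
  have g := gap hr ha d1 hM hm.
  have := dd_mono hr ha (n := i.+2) (m := j) isT hij hj.
  lra.
have ss : isq R d * isq R d <= isq R d by rewrite ler_piMl // ltW.
rewrite /Cset (negbTE (_ : i != 0)%N); last by case: i hi {hij hdd}.
rewrite (negbTE (_ : j != 0)%N); last by case: j hij {hj hdd}.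
move=> [_ [hx _]] [_ [_ /negP]]; rewrite -leNgt => hy.
have e : forall c : R, c / d%:R = c * (isq R d * isq R d) by move=> c; rewrite hw.
rewrite e in hx; rewrite e in hy; lra.
Qed.

Lemma thr (R : realType) (M : R) : exists d0 : nat, forall d : nat, (d0 <= d)%N ->
  M <= Num.sqrt (d%:R : R).
Proof.
exists (Num.truncn (M ^+ 2)).+1 => d hd.
have h1 := truncnS_gt (M ^+ 2).
have h2 : ((Num.truncn (M ^+ 2)).+1%:R : R) <= d%:R by rewrite ler_nat.
apply: (le_trans (ler_norm M)); rewrite -sqrtr_sqr ler_sqrt; last by rewrite ler0n.
lra.
Qed.

Unset Implicit Arguments.
Local Open Scope classical_set_scope.

Theorem lemma2p12 (R : realType) (rho : R) (k : nat) (kappa : R) (a : nat -> R)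
  (hrho : 1 < rho) (hk : (1 <= k)%N)
  (hkap : kappac rho k < kappa /\ kappa < 1)
  (ha : forall i : nat, (2 <= i <= k.+1)%N -> 0 < a i < 1)
  (hineq :
     1 < kappa ^+ k.+1 * ((1 + rho) ^+ 2 / (4 * rho)) *
           Num.sqrt (\prod_(2 <= j < k.+2) (1 - a j ^+ 2)) /\
     kappa ^+ k.+1 * ((1 + rho) ^+ 2 / (4 * rho)) *
           Num.sqrt (\prod_(2 <= j < k.+2) (1 - a j ^+ 2))
       < kappa * (dd rho k a k.+1 / (2 * rho))) :
  (* (i) *)
  (exists d0 : nat, forall d : nat, (3 <= d)%N -> (d0 <= d)%N ->
     forall i : nat, (1 <= i <= k.+1)%N ->
     forall y : 'I_d -> R, Cset rho k a i.-1 y ->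
       Dset rho k a i y `<=`
         (ball_d y (rr rho k i) `&` Cset rho k a i)) /\
  (* (ii) *)
  (exists d0 : nat, forall d : nat, (3 <= d)%N -> (d0 <= d)%N ->
     forall (chi1 chirho : set ('I_d -> R)) (x0 : 'I_d -> R), D0 x0 ->
     (exists X : nat -> 'I_d -> R,
        (forall i : nat, (1 <= i <= k)%N -> chi1 (X i)) /\
        chirho (X k.+1) /\
        Dset rho k a 1 x0 (X 1%N) /\
        (forall i : nat, (2 <= i <= k.+1)%N -> Dset rho k a i (X i.-1) (X i))) ->
     Gplus rho k chi1 chirho x0).
Proof.
have [d0 hd0] := thr (Mthr rho k a).
split; exists d0.
  move=> d hd hd1 i hi y Hy z Hz.
  have [h1 h2] := partI hrho ha hd (hd0 d hd1) hi Hy Hz.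
  by split.
move=> d hd hd1 chi1 chirho x0 Hx0 [X [Hc1 [Hcr [H1 HX]]]].
have hM := hd0 d hd1.
have C := chainC hrho ha hd hM Hx0 H1 HX.
have CS : forall i, (1 <= i <= k.+1)%N -> Cset rho k a i (X i).
  by case=> [//|i] hi; have [] := C i hi.
exists X; split.
  move=> i hi; split; first exact: Hc1.
  have hi' : (1 <= i <= k.+1)%N by case/andP: hi => -> h; rewrite (leq_trans h) ?leqnSn.
  by case: (CsetW _ (CS i hi')); case: i hi {hi'}.
split.
  have key : forall i j, (1 <= i <= k)%N -> (1 <= j <= k)%N -> (i < j)%N -> X i <> X j.
    move=> i j /andP[i1 ik] /andP[j1 jk] ij E.
    have hi' : (1 <= i <= k.+1)%N by rewrite i1 (leq_trans ik).
    have hj' : (1 <= j <= k.+1)%N by rewrite j1 (leq_trans jk).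
    have := sep hrho ha hd hM i1 ij (leq_trans jk (leqnSn _)) (CS i hi') (CS j hj').
    by rewrite E ltxx.
  move=> i j hi hj nij; case: (ltngtP i j) => [lt|lt|eq] //.
    exact: key.
  by move=> E; apply: (key j i hj hi lt); rewrite E.
split; first exact: Hcr.
split.
  have hk1 : (1 <= k.+1 <= k.+1)%N by rewrite leqnn.
  by case: (CsetW _ (CS k.+1 hk1)).
split.
  by have [_ h] := C 0%N isT; move: h; rewrite /rr eqxx.
split.
  move=> i /andP[i1 ik].
  have hi : (i.+1 <= k.+1)%N by rewrite ltnS (leq_trans ik) // leq_pred.
  have [_ h] := C i hi; move: h.
  have -> : rr rho k i.+1 = 2.
    rewrite /rr; case: ifP => //; case/orP => /eqP e; exfalso; lia.
  by case: i i1 {ik hi}.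
have [_ h] := C k (leqnn _); move: h.
rewrite /rr eqxx orbT.
by case: k {hd0 hM C CS Hc1 HX hineq hkap ha H1 Hcr} hk .
Qed.
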